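(* In $\mathbb{Z}[Q_1,\dots,Q_{n-1}][z_1,\dots,z_n,\eta_1,\dots,\eta_n]$, with $s_\theta=(1\,n)\in S_n$, $$\mathfrak G^Q_{s_\theta}(z|\eta)=\mathfrak G^Q_{s_1s_2\cdots s_{n-1}}(z|\eta)\cdot\mathfrak G^Q_{s_{n-2}\cdots s_2s_1}(z|\omega^{(\eta)}\eta),$$ where $\mathfrak G^Q_w(z|\omega^{(\eta)}\eta)$ is obtained from $\mathfrak G^Q_w(z|\eta)$ by the substitution $\eta_i\mapsto\eta_{i+1}$ ($\eta_{n+1}=\eta_1$).
   Context: Fix $n\ge3$. With the convention $Q_n:=0$, for $0\le m\le i\le n$ put $F^{(i)}_m=\sum_{J\subset\{1,\dots,i\},|J|=m}\prod_{j\in J,\,j+1\notin J}(1-Q_j)\prod_{j\in J}z_j$. Let $s_i^{(\eta)}$ swap $\eta_i,\eta_{i+1}$, $x\ominus y=(x-y)/(1-y)$, and $D^Q_i=1+\frac{s_i^{(\eta)}-1}{\eta_{i+1}\ominus\eta_i}$ ($1\le i\le n-1$) acting on the polynomial ring $\mathbb{Z}[Q_1,\dots,Q_{n-1}][z_1,\dots,z_n,\eta_1,\dots,\eta_n]$ (fixing $z$, $Q$). Let $\psi_i=\sum_{j=0}^i(-1)^j(1-\eta_{n-i})^jF^{(i)}_j$. The quantum double Grothendieck polynomials $\mathfrak G^Q_w(z|\eta)$, $w\in S_n$, are the unique family with $\mathfrak G^Q_{w_\circ}=\prod_{i=1}^{n-1}\psi_i$ ($w_\circ$ the longest element) and $D^Q_i\mathfrak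 G^Q_w=\mathfrak G^Q_{s_iw}$ if $s_iw<w$, $D^Q_i\mathfrak G^Q_w=\mathfrak G^Q_w$ if $s_iw>w$. *)

(* Defs.v *)
From HB Require Import structures.
From mathcomp Require Import all_boot all_order all_algebra all_fingroup.
From mathcomp Require Import fraction.
From mathcomp Require Import mpoly.

Set Implicit Arguments.
Unset Strict Implicit.
Unset Printing Implicit Defensive.

Import GRing.Theory.
Local Open Scope ring_scope.
Notation "x %:F" := (@FracField.tofrac _ x) : ring_scope.

(* The ring Z[Q_1,...,Q_{n-1}][z_1,...,z_n,eta_1,...,eta_n]:
   coefficients in Z[Q] (n-1 variables, Q_j = 'X_(j-1)),
   outer variables: z_i = 'X_(lshift n (i-1)),  eta_i = 'X_(rshift n (i-1)). *)
Definition QRing (n : nat) := {mpoly int[n.-1]}.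
Definition Ring (n : nat) := {mpoly (QRing n)[n + n]}.

(* 1-based variables; out of range indices give 0 (never used in range). *)
Definition Qv (n j : nat) : Ring n :=
  if @insub nat (fun k => k < n.-1)%N _ j.-1 is Some a then ('X_a : QRing n)%:MP
  else 0.   (* in particular Q_n := 0 *)
Definition zv (n i : nat) : Ring n :=
  if @insub nat (fun k => k < n)%N _ i.-1 is Some a then 'X_(lshift n a) else 0.
Definition eta (n i : nat) : Ring n :=
  if @insub nat (fun k => k < n)%N _ i.-1 is Some a then 'X_(rshift n a) else 0.

Definition tr (n a b : nat) : 'S_n :=
  match @insub nat (fun k => k < n)%N _ a.-1, @insub nat (fun k => k < n)%N _ b.-1 with
  | Some x, Some y => tperm x y
  | _, _ => 1%g
  end.
Definition sr (n i : nat) : 'S_n := tr n i i.+1.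

(* composition of permutations as functions: (pcomp u v) x = u (v x) *)
Definition pcomp (n : nat) (u v : 'S_n) : 'S_n := (v * u)%g.

Definition plen (n : nat) (w : 'S_n) : nat :=
  #|[set p : 'I_n * 'I_n | (p.1 < p.2)%N && (w p.2 < w p.1)%N]|.

Definition w0 (n : nat) : 'S_n := perm (@rev_ord_inj n).

(* substitution eta_k |-> eta_{f k} (0-based on 'I_n), fixing z and Q *)
Definition etasub (n : nat) (f : 'I_n -> 'I_n) (p : Ring n) : Ring n :=
  p \mPo [tuple (match split k with
                 | inl i => 'X_(lshift n i)
                 | inr j => 'X_(rshift n (f j)) end : Ring n) | k < n + n].

Definition s_eta (n i : nat) (p : Ring n) : Ring n := etasub (sr n i) p.
Definition omega_eta (n : nat) (p : Ring n) : Ring n := etasub (@ordS n) p.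

(* D^Q_i = 1 + (s_i^{(eta)} - 1)/(eta_{i+1} (-) eta_i), x (-) y = (x-y)/(1-y),
   computed in the fraction field of the polynomial ring. *)
Definition DQ (n i : nat) (f : Ring n) : {fraction Ring n} :=
  f%:F + ((@s_eta n i f)%:F - f%:F) /
         ((eta n i.+1 - eta n i)%:F / (1 - eta n i)%:F).

(* F^{(i)}_m, J ranging over subsets of {1,...,i} (encoded as {set 'I_i},
   a : 'I_i standing for a+1) *)
Definition Fpol (n i m : nat) : Ring n :=
  \sum_(J : {set 'I_i} | #|J| == m)
     (\prod_(a in J | [forall b in J, val b != (val a).+1]) (1 - Qv n (val a).+1))
     * \prod_(a in J) zv n (val a).+1.

Definition psi (n i : nat) : Ring n :=
  \sum_(j < i.+1) (-1) ^+ j * (1 - eta n (n - i)) ^+ j * Fpol n i j.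

Definition Gtop (n : nat) : Ring n := \prod_(1 <= i < n) psi n i.

Definition is_QGroth (n : nat) (G : 'S_n -> Ring n) : Prop :=
  G (w0 n) = Gtop n /\
  forall (i : nat), (1 <= i)%N -> (i <= n.-1)%N -> forall w : 'S_n,
    if (plen (pcomp (sr n i) w) < plen w)%N
    then @DQ n i (G w) = (G (pcomp (sr n i) w))%:F
    else @DQ n i (G w) = (G w)%:F.

Definition sprod (n : nat) (l : seq nat) : 'S_n :=
  foldr (fun i acc => pcomp (sr n i) acc) 1%g l.

(* Main.v *)
Require Import Defs.
From HB Require Import structures.
From mathcomp Require Import all_boot all_order all_algebra all_fingroup.
From mathcomp Require Import fraction.
From mathcomp Require Import mpoly.
From mathcomp Require Import zify ring.
Set Implicit Arguments.
Unset Strict Implicit.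
Unset Printing Implicit Defensive.
Import GRing.Theory.

Ltac ifs := repeat (case: ifP); intros; lia.

Definition sw (i m : nat) : nat := if m == i.-1 then i else if m == i then i.-1 else m.

Lemma tr_val n a b (x : 'I_n) : (1 <= a <= n)%N -> (1 <= b <= n)%N ->
  val (tr n a b x) = if val x == a.-1 then b.-1 else if val x == b.-1 then a.-1 else val x.
Proof.
move=> ha hb; rewrite /tr.
have pa : (a.-1 < n)%N by lia.
have pb : (b.-1 < n)%N by lia.
rewrite (insubT (fun k => k < n)%N pa) (insubT (fun k => k < n)%N pb).
case: tpermP => [->|->|/eqP h1 /eqP h2] /=; first by ifs.
  by ifs.
have h1' : val x != a.-1 by apply: contra h1 => /eqP h; apply/eqP/val_inj.
have h2' : val x != b.-1 by apply: contra h2 => /eqP h; apply/eqP/val_inj.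
by rewrite (negbTE h1') (negbTE h2').
Qed.

Lemma sr_val n i (x : 'I_n) : (1 <= i < n)%N -> val (sr n i x) = sw i (val x).
Proof.
move=> h; rewrite /sr tr_val; try lia. rewrite /sw /=. by [].
Qed.

Definition Fw (l : seq nat) (m : nat) : nat := foldl (fun m i => sw i m) m l.
Definition wapp n (l : seq nat) (w : 'S_n) : 'S_n := foldl (fun (v : 'S_n) (i : nat) => Defs.pcomp (sr n i) v) w l.
Definition valid n (l : seq nat) := all (fun i => (1 <= i < n)%N) l.

Lemma wapp_val n l (w : 'S_n) x : valid n l -> val (wapp l w x) = Fw l (val (w x)).
Proof.
elim: l w => [|i l IH] w //= /andP [hi hl].
by rewrite IH // /Defs.pcomp permM sr_val.
Qed.

Lemma sprod_val n l x : valid n l -> val (sprod n l x) = Fw (rev l) (val x).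
Proof.
elim: l x => [|i l IH] x /=; first by rewrite perm1.
move=> /andP [hi hl]; rewrite /Defs.pcomp permM sr_val // IH //.
by rewrite rev_cons /Fw foldl_rcons.
Qed.

Lemma Fw_cat l1 l2 m : Fw (l1 ++ l2) m = Fw l2 (Fw l1 m).
Proof. by rewrite /Fw foldl_cat. Qed.

Lemma Fw_iota a k m : (1 <= a)%N -> Fw (iota a k) m =
  if m == a.-1 then (a.-1 + k)%N else if (a <= m) && (m < a + k)%N then m.-1 else m.
Proof.
move=> ha; elim: k => [|k IH]; first by rewrite /=; ifs.
rewrite -addn1 iotaD Fw_cat IH /= /sw; ifs.
Qed.

Lemma Fw_reviota a k m : (1 <= a)%N -> Fw (rev (iota a k)) m =
  if m == (a.-1 + k)%N then a.-1 else if (a.-1 <= m) && (m < a.-1 + k)%N then m.+1 else m.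
Proof.
move=> ha; elim: k m => [|k IH] m; first by rewrite /=; ifs.
rewrite -addn1 iotaD rev_cat Fw_cat IH /= /sw; ifs.
Qed.

Fixpoint W (s M : nat) : seq nat :=
  match M with 0 => [::] | M'.+1 => iota s.+1 M' ++ W s M' end.

Lemma Fw_W s M m : Fw (W s M) m =
  if (s <= m) && (m < s + M)%N then (s + s + M - 1 - m)%N else m.
Proof.
elim: M m => [|M IH] m /=; first by ifs.
rewrite Fw_cat IH Fw_iota //=; ifs.
Qed.

Lemma size_W s M : size (W s M) = 'C(M, 2).
Proof.
elim: M => [|M IH] //=; rewrite size_cat size_iota IH binS bin1; lia.
Qed.

Lemma mem_W s M i : i \in W s M -> (s < i < s + M)%N.
Proof.
elim: M => [|M IH] //=; rewrite mem_cat mem_iota => /orP [h|/IH]; lia.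
Qed.

Lemma valid_W n s M : (s + M <= n)%N -> valid n (W s M).
Proof. move=> h; apply/allP => i /mem_W; lia. Qed.

Lemma valid_iota n a k : (1 <= a)%N -> (a + k <= n)%N -> valid n (iota a k).
Proof. move=> h1 h2; apply/allP => i; rewrite mem_iota; lia. Qed.

Lemma valid_cat n l1 l2 : valid n (l1 ++ l2) = valid n l1 && valid n l2.
Proof. by rewrite /valid all_cat. Qed.

Lemma valid_rev n l : valid n (rev l) = valid n l.
Proof. by rewrite /valid all_rev. Qed.

Lemma w0_val n (x : 'I_n) : val (w0 n x) = (n - 1 - val x)%N.
Proof. rewrite /w0 permE /=; lia. Qed.

Lemma permvalP n (u v : 'S_n) : (forall x : 'I_n, val (u x) = val (v x)) -> u = v.
Proof. by move=> h; apply/permP => x; apply/val_inj. Qed.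

Section PermIds.
Variable n : nat.
Hypothesis hn : (3 <= n)%N.

Lemma P1 : wapp (iota 1 n.-1 ++ W 0 (n - 2)) (w0 n) = sprod n (rev (iota 1 (n - 2))).
Proof.
apply: permvalP => x.
rewrite wapp_val; last by rewrite valid_cat valid_iota ?valid_W //; lia.
rewrite sprod_val; last by rewrite valid_rev valid_iota //; lia.
rewrite revK w0_val Fw_cat Fw_W !Fw_iota //=.
have := ltn_ord x; ifs.
Qed.

Lemma P2 : wapp (W 1 (n - 2)) (w0 n) = tr n 1 n.
Proof.
apply: permvalP => x.
rewrite wapp_val; last by rewrite valid_W //; lia.
rewrite tr_val; try lia.
rewrite w0_val Fw_W /=.
have := ltn_ord x; ifs.
Qed.

Lemma P3 : wapp (W 1 n.-1) (w0 n) = sprod n (iota 1 n.-1).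
Proof.
apply: permvalP => x.
rewrite wapp_val; last by rewrite valid_W //; lia.
rewrite sprod_val; last by rewrite valid_iota //; lia.
rewrite w0_val Fw_W Fw_reviota //=.
have := ltn_ord x; ifs.
Qed.

Lemma P4 : tr n 1 n = sprod n (iota 1 n.-1 ++ rev (iota 1 (n - 2))).
Proof.
apply: permvalP => x.
rewrite sprod_val; last by rewrite valid_cat valid_rev !valid_iota //; lia.
rewrite tr_val; try lia.
rewrite rev_cat revK Fw_cat Fw_iota // Fw_reviota //=.
have := ltn_ord x; ifs.
Qed.
End PermIds.

Lemma sw_flip i x y : (1 <= i)%N -> x != y -> (sw i y < sw i x)%N -> ~~ (y < x)%N ->
  x = i.-1 /\ y = i.
Proof. rewrite /sw => h1 /eqP h2; ifs. Qed.

Lemma plen_sr n i (w : 'S_n) : (1 <= i < n)%N ->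
  (plen (Defs.pcomp (sr n i) w) <= (plen w).+1)%N.
Proof.
move=> hi.
have pa : (i.-1 < n)%N by lia.
have pb : (i < n)%N by lia.
pose e := ((w^-1)%g (Ordinal pa), (w^-1)%g (Ordinal pb)).
rewrite /plen.
set A := [set p | _]; set B := [set p | _].
have sub : A \subset e |: B.
  apply/subsetP => p; rewrite !inE /Defs.pcomp !permM.
  case/andP => h12; rewrite !sr_val //.
  case hB : (val (w p.2) < val (w p.1))%N; first by rewrite h12 orbT.
  move=> hlt.
  have hne : val (w p.1) != val (w p.2).
    apply/eqP => /val_inj /perm_inj h; move: h12; by rewrite h ltnn.
  have [e1 e2] := sw_flip (i := i) ltac:(lia) hne hlt (negbT hB).
  apply/orP; left; apply/eqP.
  have E1 : Ordinal pa = w p.1 by apply/val_inj; rewrite /= e1.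
  have E2 : Ordinal pb = w p.2 by apply/val_inj; rewrite /= e2.
  by rewrite /e E1 E2 !permK; case: (p).
apply: leq_trans (subset_leq_card sub) _.
rewrite cardsU1; case: (e \notin B) => //.
Qed.

Lemma sr2 n i : (sr n i * sr n i)%g = 1%g.
Proof.
rewrite /sr /tr; case: insub => [x|]; last by rewrite mulg1.
case: insub => [y|]; last by rewrite mulg1.
exact: tperm2.
Qed.

Lemma sr_inv n i (w : 'S_n) : Defs.pcomp (sr n i) (Defs.pcomp (sr n i) w) = w.
Proof. by rewrite /Defs.pcomp -mulgA sr2 mulg1. Qed.

Lemma plen_sr' n i (w : 'S_n) : (1 <= i < n)%N ->
  (plen w <= (plen (Defs.pcomp (sr n i) w)).+1)%N.
Proof. move=> h; rewrite -{1}(sr_inv i w); exact: plen_sr. Qed.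

Lemma plen1 n : plen (1%g : 'S_n) = 0%N.
Proof.
rewrite /plen; apply/eqP; rewrite cards_eq0; apply/eqP/setP => p.
rewrite !inE !perm1; lia.
Qed.

Lemma plen_sprod n l : valid n l -> (plen (sprod n l) <= size l)%N.
Proof.
elim: l => [|i l IH] /=; first by rewrite plen1.
move=> /andP [hi hl]; apply: leq_trans (plen_sr _ hi) _; exact: IH.
Qed.

Lemma plen_wapp n l (w : 'S_n) : valid n l -> (plen w <= plen (wapp l w) + size l)%N.
Proof.
elim: l w => [|i l IH] w /=; first by lia.
move=> /andP [hi hl]; have := plen_sr' w hi; have := IH (Defs.pcomp (sr n i) w) hl.
rewrite /wapp /=; lia.
Qed.

Fixpoint chain_desc n (l : seq nat) (w : 'S_n) : Prop :=
  match l with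
  | [::] => True
  | i :: l' => (plen (Defs.pcomp (sr n i) w) < plen w)%N /\ chain_desc l' (Defs.pcomp (sr n i) w)
  end.

Lemma chain_descP n l (w : 'S_n) : valid n l ->
  (plen (wapp l w) + size l <= plen w)%N -> chain_desc l w.
Proof.
elim: l w => [|i l IH] w //= /andP [hi hl] h.
have h2 := plen_wapp (Defs.pcomp (sr n i) w) hl.
rewrite /wapp /= -/(wapp l _) in h h2.
split; first by lia.
apply: IH => //; have := plen_sr' w hi; lia.
Qed.

Lemma chain_desc_cat n l1 l2 (w : 'S_n) :
  chain_desc (l1 ++ l2) w -> chain_desc l1 w /\ chain_desc l2 (wapp l1 w).
Proof.
elim: l1 w => [|i l IH] w //= [h1 h2].
by have [? ?] := IH _ h2.
Qed.

Lemma card_lt_pairs n : #|[set p : 'I_n * 'I_n | (p.1 < p.2)%N]| = 'C(n, 2).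
Proof.
rewrite -sum1dep_card.
rewrite -(pair_big_dep xpredT (fun i j : 'I_n => (i < j)%N) (fun _ _ => 1%N)) /=.
rewrite (exchange_big_dep xpredT) //=.
rewrite -bin2_sum big_mkord; apply: eq_bigr => j _.
rewrite (big_ord_narrow (ltnW (ltn_ord j))) /= sum1_card card_ord //.
Qed.

Lemma plen_w0 n : plen (w0 n) = 'C(n, 2).
Proof.
rewrite -card_lt_pairs /plen; apply: eq_card => p; rewrite !inE.
have := ltn_ord p.1; have := ltn_ord p.2.
rewrite /w0 !permE /=; case: ltnP => h; lia.
Qed.

Lemma binS2 k : 'C(k.+1, 2) = ('C(k, 2) + k)%N.
Proof. by rewrite binS bin1. Qed.

Section Chains.
Variable n : nat.
Hypothesis hn : (3 <= n)%N.

Lemma chainA : chain_desc (iota 1 n.-1 ++ W 0 (n - 2)) (w0 n).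
Proof.
apply: chain_descP; first by rewrite valid_cat valid_iota ?valid_W //; lia.
rewrite P1 // plen_w0 size_cat size_iota size_W.
have := plen_sprod (n := n) (l := rev (iota 1 (n - 2))).
rewrite valid_rev valid_iota ?size_rev ?size_iota; try lia.
move=> /(_ isT) h.
case: n hn h => [|[|[|m]]] //= _ h.
rewrite !subSS subn0 !binS2 in h *; lia.
Qed.

Lemma chainB : chain_desc (W 1 (n - 2)) (w0 n).
Proof.
apply: chain_descP; first by rewrite valid_W //; lia.
rewrite P2 // P4 // plen_w0 size_W.
have := plen_sprod (n := n) (l := iota 1 n.-1 ++ rev (iota 1 (n - 2))).
rewrite valid_cat valid_rev !valid_iota ?size_cat ?size_rev ?size_iota; try lia.
move=> /(_ isT) h.
case: n hn h => [|[|[|m]]] //= _ h.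
rewrite !subSS subn0 !binS2 in h *; lia.
Qed.

Lemma chainC : chain_desc (W 1 n.-1) (w0 n).
Proof.
apply: chain_descP; first by rewrite valid_W //; lia.
rewrite P3 // plen_w0 size_W.
have := plen_sprod (n := n) (l := iota 1 n.-1).
rewrite valid_iota ?size_iota; try lia.
move=> /(_ isT) h.
case: n hn h => [|[|[|m]]] //= _ h.
rewrite !binS2 in h *; lia.
Qed.
End Chains.


Local Open Scope ring_scope.

Lemma add_aux (R : comRingType) (g1 f1 g2 f2 a1 a2 d e : R) :
  (g1 - f1) * d = (a1 - f1) * e -> (g2 - f2) * d = (a2 - f2) * e ->
  (g1 + g2 - (f1 + f2)) * d = (a1 + a2 - (f1 + f2)) * e.
Proof.
move=> h1 h2.
have -> : g1 + g2 - (f1 + f2) = (g1 - f1) + (g2 - f2) by ring.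
have -> : a1 + a2 - (f1 + f2) = (a1 - f1) + (a2 - f2) by ring.
by rewrite (mulrDl (g1 - f1)) (mulrDl (a1 - f1)) h1 h2.
Qed.

Lemma dq_aux (K : fieldType) (F S G D E : K) : D != 0 -> E != 0 ->
  F + (S - F) / (D / E) = G -> (G - F) * D = (S - F) * E.
Proof. move=> hD hE <-. field. by rewrite hD hE. Qed.

Section Alg.
Variable n : nat.
Local Notation RR := (Ring n).
Implicit Types (f : 'I_n -> 'I_n).

Definition isC (c : RR) := forall f : 'I_n -> 'I_n, etasub f c = c.

Lemma etasubD f : {morph etasub f : x y / x + y}.
Proof. by move=> x y; rewrite /etasub rmorphD. Qed.
Lemma etasubB f : {morph etasub f : x y / x - y}.
Proof. by move=> x y; rewrite /etasub rmorphB. Qed.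
Lemma etasubM f : {morph etasub f : x y / x * y}.
Proof. by move=> x y; rewrite /etasub rmorphM. Qed.
Lemma etasubN f : {morph etasub f : x / - x}.
Proof. by move=> x; rewrite /etasub rmorphN. Qed.
Lemma etasub1 f : etasub f 1 = 1.
Proof. by rewrite /etasub rmorph1. Qed.
Lemma etasub0 f : etasub f 0 = 0.
Proof. by rewrite /etasub rmorph0. Qed.
Lemma etasubX f x k : etasub f (x ^+ k) = etasub f x ^+ k.
Proof. by rewrite /etasub rmorphXn. Qed.
Lemma etasub_sum f I (r : seq I) (P : pred I) (F : I -> RR) :
  etasub f (\sum_(i <- r | P i) F i) = \sum_(i <- r | P i) etasub f (F i).
Proof. by rewrite /etasub rmorph_sum. Qed.
Lemma etasub_prod f I (r : seq I) (P : pred I) (F : I -> RR) :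
  etasub f (\prod_(i <- r | P i) F i) = \prod_(i <- r | P i) etasub f (F i).
Proof. by rewrite /etasub rmorph_prod. Qed.
Lemma etasubC f c : etasub f c%:MP = c%:MP.
Proof. by rewrite /etasub comp_mpolyC. Qed.

Lemma etasub_var f k : etasub f 'X_k =
  match split k with
  | inl i => 'X_(lshift n i)
  | inr j => 'X_(rshift n (f j)) end.
Proof. by rewrite /etasub comp_mpolyXU -tnth_nth tnth_mktuple. Qed.

Lemma split_r (a : 'I_n) : split (rshift n a) = inr a.
Proof. exact: (unsplitK (inr a)). Qed.
Lemma split_l (a : 'I_n) : split (lshift n a) = inl a.
Proof. exact: (unsplitK (inl a)). Qed.

Lemma eta_ord (a : 'I_n) : Defs.eta n a.+1 = 'X_(rshift n a).
Proof. by rewrite /Defs.eta /= valK. Qed.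

Lemma etasub_eta_ord f (a : 'I_n) : etasub f (Defs.eta n a.+1) = Defs.eta n (f a).+1.
Proof. by rewrite eta_ord etasub_var split_r eta_ord. Qed.

Lemma s_eta_eta i k : (1 <= i < n)%N -> (1 <= k <= n)%N ->
  s_eta i (Defs.eta n k) = Defs.eta n (sw i k.-1).+1.
Proof.
move=> hi hk; have ha : (k.-1 < n)%N by lia.
have -> : k = (Ordinal ha).+1 by rewrite /=; lia.
by rewrite /s_eta etasub_eta_ord sr_val.
Qed.

Lemma omega_eta_eta k : (1 <= k < n)%N -> omega_eta (Defs.eta n k) = Defs.eta n k.+1.
Proof.
move=> hk; have ha : (k.-1 < n)%N by lia.
have -> : k = (Ordinal ha).+1 by rewrite /=; lia.
rewrite /omega_eta etasub_eta_ord /=; congr (Defs.eta n _.+1).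
rewrite modn_small; lia.
Qed.

Lemma zv_C k : isC (zv n k).
Proof.
move=> f; rewrite /zv; case: insub => [a|]; last exact: etasub0.
by rewrite etasub_var split_l.
Qed.

Lemma Qv_C k : isC (Qv n k).
Proof.
move=> f; rewrite /Qv; case: insub => [a|]; last exact: etasub0.
exact: etasubC.
Qed.

Lemma isC1 : isC 1. Proof. exact: etasub1. Qed.
Lemma isCD a b : isC a -> isC b -> isC (a + b).
Proof. by move=> ha hb f; rewrite etasubD ha hb. Qed.
Lemma isCB a b : isC a -> isC b -> isC (a - b).
Proof. by move=> ha hb f; rewrite etasubB ha hb. Qed.
Lemma isCM a b : isC a -> isC b -> isC (a * b).
Proof. by move=> ha hb f; rewrite etasubM ha hb. Qed.
Lemma isCX a k : isC a -> isC (a ^+ k).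
Proof. by move=> ha f; rewrite etasubX ha. Qed.
Lemma isCN1 : isC (-1).
Proof. by move=> f; rewrite etasubN etasub1. Qed.
Lemma isC_sum I (r : seq I) (P : pred I) (F : I -> RR) :
  (forall i, P i -> isC (F i)) -> isC (\sum_(i <- r | P i) F i).
Proof. by move=> h f; rewrite etasub_sum; apply: eq_bigr => i /h ->. Qed.
Lemma isC_prod I (r : seq I) (P : pred I) (F : I -> RR) :
  (forall i, P i -> isC (F i)) -> isC (\prod_(i <- r | P i) F i).
Proof. by move=> h f; rewrite etasub_prod; apply: eq_bigr => i /h ->. Qed.

Lemma Fpol_C i m : isC (Fpol n i m).
Proof.
apply: isC_sum => J _; apply: isCM; apply: isC_prod => a _.
  apply: isCB; [exact: isC1| exact: Qv_C].
exact: zv_C.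
Qed.

Lemma Fpol0 i : Fpol n i 0 = 1.
Proof.
rewrite /Fpol (big_pred1 set0); last by move=> J; rewrite /= cards_eq0.
rewrite !big1 ?mulr1 // => a; by rewrite inE.
Qed.


Lemma etasubZ f c (p : RR) : etasub f (c *: p) = c *: etasub f p.
Proof. by rewrite /etasub comp_mpolyZ. Qed.

Lemma etasubXm f (m : 'X_{1.. n + n}) : etasub f ('X_[m] : RR) = \prod_(i < n + n) (etasub f 'X_i) ^+ (m i).
Proof.
rewrite {1}/etasub comp_mpolyX; apply: eq_bigr => i _.
by rewrite /etasub comp_mpolyXU -tnth_nth.
Qed.

Lemma etasub_compX f g (m : 'X_{1.. n + n}) :
  etasub f (etasub g ('X_[m] : RR)) = etasub (f \o g) 'X_[m].
Proof.
rewrite !etasubXm etasub_prod; apply: eq_bigr => i _.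
have e : etasub f (etasub g 'X_i) = etasub (f \o g) ('X_i : RR).
  rewrite [etasub g _]etasub_var [etasub (f \o g) _]etasub_var.
  by case: (split i) => [a|a]; rewrite etasub_var ?split_l ?split_r.
by rewrite etasubX e.
Qed.

Lemma etasub_comp f g (p : RR) : etasub f (etasub g p) = etasub (f \o g) p.
Proof.
elim/mpolyind: p => [|c m p _ _ IH]; first by rewrite !etasub0.
have h1 : etasub f (etasub g (c *: 'X_[m])) = etasub (f \o g) (c *: ('X_[m] : RR)).
  by rewrite !etasubZ etasub_compX.
rewrite (etasubD g) (etasubD f) (etasubD (f \o g)).
exact: (congr2 +%R h1 IH).
Qed.

Lemma etasub_extX f g (m : 'X_{1.. n + n}) : f =1 g -> etasub f ('X_[m] : RR) = etasub g 'X_[m].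
Proof.
move=> e; rewrite !etasubXm; apply: eq_bigr => i _.
have h : etasub f ('X_i : RR) = etasub g 'X_i.
  by rewrite !etasub_var; case: (split i) => [a|a] //; rewrite e.
by rewrite h.
Qed.

Lemma etasub_ext f g (p : RR) : f =1 g -> etasub f p = etasub g p.
Proof.
move=> e; elim/mpolyind: p => [|c m p _ _ IH]; first by rewrite !etasub0.
have h1 : etasub f (c *: ('X_[m] : RR)) = etasub g (c *: ('X_[m] : RR)).
  by rewrite !etasubZ (etasub_extX _ e).
rewrite (etasubD g) (etasubD f).
exact: (congr2 +%R h1 IH).
Qed.

Lemma sw_ordS i a : (1 <= i)%N -> (i.+1 < n)%N -> (a < n)%N ->
  ((sw i a).+1 %% n = sw i.+1 (a.+1 %% n))%N.
Proof.
move=> h1 h2 h3; case: (ltnP a.+1 n) => h4.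
  rewrite (modn_small h4) modn_small; rewrite /sw; ifs.
have e : a = n.-1 by lia.
have -> : sw i a = n.-1 by rewrite /sw; ifs.
have -> : a.+1 = n by lia.
have -> : n.-1.+1 = n by lia.
by rewrite modnn /sw; ifs.
Qed.

Lemma omega_s i (p : RR) : (1 <= i)%N -> (i.+1 < n)%N ->
  omega_eta (s_eta i p) = s_eta i.+1 (omega_eta p).
Proof.
move=> h1 h2; rewrite /omega_eta /s_eta !etasub_comp; apply: etasub_ext => a /=.
apply/val_inj; rewrite /= !sr_val //=; last by lia.
exact: sw_ordS.
Qed.


Lemma XsubX_neq0 (a b : 'I_(n + n)) : a != b -> ('X_a - 'X_b : RR) != 0.
Proof.
move=> hab; apply/eqP => h; have := congr1 (mcoeff U_(a)) h.
rewrite mcoeffB !mcoeffXU eqxx eq_sym (negbTE hab) mcoeff0 subr0 => /eqP.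
by rewrite oner_eq0.
Qed.

Lemma oneX_neq0 (a : 'I_(n + n)) : (1 - 'X_a : RR) != 0.
Proof.
apply/eqP => h; have := congr1 (mcoeff U_(a)) h.
rewrite mcoeffB mcoeffXU eqxx mcoeff1 mnm1_eq0 mcoeff0 sub0r => /eqP.
by rewrite oppr_eq0 oner_eq0.
Qed.

Lemma deta_neq0 i : (1 <= i < n)%N -> Defs.eta n i.+1 - Defs.eta n i != 0.
Proof.
move=> h; have ha : (i.-1 < n)%N by lia.
have hb : (i < n)%N by lia.
have -> : i = (Ordinal ha).+1 by rewrite /=; lia.
rewrite (_ : (Ordinal ha).+2 = (Ordinal hb).+1); last by rewrite /=; lia.
rewrite !eta_ord; apply: XsubX_neq0.
apply/eqP => /(congr1 val) /=; lia.
Qed.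

Lemma eeta_neq0 i : (1 <= i <= n)%N -> 1 - Defs.eta n i != 0.
Proof.
move=> h; have ha : (i.-1 < n)%N by lia.
have -> : i = (Ordinal ha).+1 by rewrite /=; lia.
by rewrite eta_ord oneX_neq0.
Qed.

Lemma cancel_RR (a b d : RR) : d != 0 -> a * d = b * d -> a = b.
Proof. move=> h; exact: mulIf. Qed.

Definition Rel i (f g : RR) : Prop :=
  (g - f) * (Defs.eta n i.+1 - Defs.eta n i) = (s_eta i f - f) * (1 - Defs.eta n i).

Lemma Rel_uniq i (f g1 g2 : RR) : (1 <= i < n)%N -> Rel i f g1 -> Rel i f g2 -> g1 = g2.
Proof.
move=> hi; rewrite /Rel => h1 h2.
have /(cancel_RR (deta_neq0 hi)) e := etrans h1 (esym h2).
by have := congr1 (fun x => x + f) e; rewrite !subrK.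
Qed.

Lemma Rel_add i (f1 g1 f2 g2 : RR) : Rel i f1 g1 -> Rel i f2 g2 -> Rel i (f1 + f2) (g1 + g2).
Proof.
rewrite /Rel /s_eta etasubD; exact: add_aux.
Qed.

Lemma Rel_mulc i (c f g : RR) : s_eta i c = c -> Rel i f g -> Rel i (c * f) (c * g).
Proof.
rewrite /Rel /s_eta etasubM => -> h.
by rewrite -!mulrBr -!mulrA h.
Qed.

Lemma Rel_0 i : Rel i 0 0.
Proof. by rewrite /Rel /s_eta etasub0 !subrr !mul0r. Qed.

Lemma tofrac_inj' (a b : RR) : a%:F = b%:F :> {fraction RR} -> a = b.
Proof. by move=> /eqP; rewrite tofrac_eq => /eqP. Qed.

Lemma tofrac_neq0' (a : RR) : a != 0 -> a%:F != 0 :> {fraction RR}.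
Proof. by rewrite tofrac_eq0. Qed.

Lemma Rel_DQ i (f g : RR) : (1 <= i < n)%N -> DQ i f = g%:F -> Rel i f g.
Proof.
move=> hi; rewrite /DQ /Rel => h.
have d0 := tofrac_neq0' (deta_neq0 hi).
have e0 : (1 - Defs.eta n i)%:F != 0 :> {fraction RR}.
  by apply: tofrac_neq0'; apply: eeta_neq0; lia.
have := dq_aux d0 e0 h.
rewrite -!tofracB -!tofracM.
exact: tofrac_inj'.
Qed.


Fixpoint Rword (l : seq nat) (f g : RR) : Prop :=
  match l with
  | [::] => f = g
  | i :: l' => exists h, Rel i f h /\ Rword l' h g
  end.

Lemma Rword_uniq l (f g1 g2 : RR) : valid n l -> Rword l f g1 -> Rword l f g2 -> g1 = g2.
Proof.
elim: l f => [|i l IH] f /=; first by move=> _ <- <-.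
move=> /andP [hi hl] [h1 [r1 w1]] [h2 [r2 w2]].
have e := Rel_uniq hi r1 r2; subst h2; exact: IH w1 w2.
Qed.

Lemma Rword_cat l1 l2 (f g h : RR) : Rword l1 f g -> Rword l2 g h -> Rword (l1 ++ l2) f h.
Proof.
elim: l1 f => [|i l IH] f /=; first by move=> ->.
by move=> [k [r w]] w2; exists k; split => //; exact: IH w w2.
Qed.

Lemma Rword_add l (f1 g1 f2 g2 : RR) : Rword l f1 g1 -> Rword l f2 g2 -> Rword l (f1 + f2) (g1 + g2).
Proof.
elim: l f1 f2 => [|i l IH] f1 f2 /=; first by move=> -> ->.
move=> [h1 [r1 w1]] [h2 [r2 w2]]; exists (h1 + h2); split; first exact: Rel_add.
exact: IH.
Qed.

Lemma Rword_0 l : Rword l 0 0.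
Proof. elim: l => [|i l IH] //=; exists 0; split => //; exact: Rel_0. Qed.

Lemma Rword_mulc l (c f g : RR) : (forall i, i \in l -> s_eta i c = c) ->
  Rword l f g -> Rword l (c * f) (c * g).
Proof.
elim: l f => [|i l IH] f /= hc; first by move=> ->.
move=> [h [r w]]; exists (c * h); split.
  by apply: Rel_mulc => //; apply: hc; rewrite inE eqxx.
by apply: IH => // j hj; apply: hc; rewrite inE hj orbT.
Qed.

Lemma Rword_sum l I (r : seq I) (F G : I -> RR) :
  (forall i, Rword l (F i) (G i)) -> Rword l (\sum_(i <- r) F i) (\sum_(i <- r) G i).
Proof.
move=> h; elim: r => [|a r IH]; first by rewrite !big_nil; exact: Rword_0.
rewrite !big_cons; exact: Rword_add.
Qed.

Lemma Rword_eq l (f g f' g' : RR) : f = f' -> g = g' -> Rword l f g -> Rword l f' g'.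
Proof. by move=> -> ->. Qed.

End Alg.

Definition Hf (R : comRingType) (x w : R) (p a : nat) : R :=
  if (p <= a)%N then x ^+ p * w ^+ p * \sum_(k < (a - p).+1) x ^+ ((a - p).+1.-1 - k) * w ^+ k
  else - (x ^+ a.+1 * w ^+ a.+1 * \sum_(k < (p - a).-1) x ^+ ((p - a).-1.-1 - k) * w ^+ k).

Lemma Hf_spec (R : comRingType) (x w : R) p a :
  Hf x w p a * (x - w) = x ^+ a.+1 * w ^+ p - x ^+ p * w ^+ a.+1.
Proof.
rewrite /Hf; case: leqP => h.
  set S := (\sum_(k < _) _).
  have e : (x - w) * S = x ^+ (a - p).+1 - w ^+ (a - p).+1 by rewrite /S subrXX.
  transitivity (x ^+ p * w ^+ p * ((x - w) * S)); first by ring.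
  rewrite e.
  have -> : x ^+ a.+1 = x ^+ p * x ^+ (a - p).+1 by rewrite -exprD; congr (_ ^+ _); lia.
  have -> : w ^+ a.+1 = w ^+ p * w ^+ (a - p).+1 by rewrite -exprD; congr (_ ^+ _); lia.
  ring.
set S := (\sum_(k < _) _).
have e : (x - w) * S = x ^+ (p - a).-1 - w ^+ (p - a).-1 by rewrite /S subrXX.
transitivity (- (x ^+ a.+1 * w ^+ a.+1 * ((x - w) * S))); first by ring.
rewrite e.
have -> : x ^+ p = x ^+ a.+1 * x ^+ (p - a).-1 by rewrite -exprD; congr (_ ^+ _); lia.
have -> : w ^+ p = w ^+ a.+1 * w ^+ (p - a).-1 by rewrite -exprD; congr (_ ^+ _); lia.
ring.
Qed.

Lemma Hf_rel (R : comRingType) (x w : R) p a :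
  (Hf x w p a - x ^+ p * w ^+ a) * (x - w) = (w ^+ p * x ^+ a - x ^+ p * w ^+ a) * x.
Proof.
rewrite mulrBl Hf_spec.
have -> : x ^+ a.+1 = x ^+ a * x by rewrite exprSr.
have -> : w ^+ a.+1 = w ^+ a * w by rewrite exprSr.
ring.
Qed.

Lemma sum_first (R : comRingType) (x g : R) a :
  \sum_(k < (a - 0).+1) (x ^+ 0 * x ^+ ((a - 0).+1.-1 - k)) * (if (0 + k == 0)%N then g else 0)
  = x ^+ a * g.
Proof.
rewrite big_ord_recl big1 ?addr0; last by move=> k _; rewrite add0n lift0 /= mulr0.
by rewrite /= expr0 mul1r !subn0.
Qed.
Lemma sum_zero (R : comRingType) N (c : 'I_N -> R) (g : R) b :
  (0 < b)%N -> \sum_(k < N) c k * (if (b + k == 0)%N then g else 0) = 0.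
Proof. move=> hb; rewrite big1 // => k _; have -> : (b + k == 0)%N = false by lia. by rewrite mulr0. Qed.

Lemma expand1 (R : comRingType) (x w g : R) p N (e : 'I_N -> nat) :
  \sum_(k < N) (x ^+ p * x ^+ e k) * (w ^+ (p + k) * g) =
  g * (x ^+ p * w ^+ p * \sum_(k < N) x ^+ e k * w ^+ k).
Proof. rewrite !mulr_sumr; apply: eq_bigr => k _; rewrite exprD; ring. Qed.
Lemma expand2 (R : comRingType) (x w g : R) b N (e : 'I_N -> nat) :
  \sum_(k < N) (- (x ^+ b * x ^+ e k)) * (w ^+ (b + k) * g) =
  g * - (x ^+ b * w ^+ b * \sum_(k < N) x ^+ e k * w ^+ k).
Proof. rewrite mulrN !mulr_sumr -sumrN; apply: eq_bigr => k _; rewrite exprD; ring. Qed.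

Lemma Pm_expand (R : comRingType) m (t P : R) (F : nat -> R) :
  (\sum_(j < m.+1) (-1) ^+ j * t ^+ j * F j) * P =
  \sum_(j < m.+1) ((-1) ^+ j * F j) * (t ^+ j * P).
Proof. rewrite mulr_suml; apply: eq_bigr => j _; ring. Qed.
Lemma sum_if0 (R : comRingType) N (c : 'I_N.+1 -> R) (X : R) :
  \sum_(p < N.+1) c p * (if (nat_of_ord p == 0)%N then X else 0) = c ord0 * X.
Proof.
rewrite big_ord_recl big1 ?addr0 // => k _.
by rewrite lift0 /= mulr0.
Qed.

Lemma prod_recl_gen (R : comRingType) K (F : nat -> R) :
  \prod_(1 <= k < K.+2) F k = F 1%N * \prod_(1 <= k < K.+1) F k.+1.
Proof. by rewrite big_nat_recl. Qed.

Section S.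
Variable n : nat.
Local Notation RR := (Ring n).

Lemma omegaD : {morph @omega_eta n : x y / x + y}.
Proof. exact: etasubD. Qed.
Lemma omegaB : {morph @omega_eta n : x y / x - y}.
Proof. exact: etasubB. Qed.
Lemma omegaM : {morph @omega_eta n : x y / x * y}.
Proof. exact: etasubM. Qed.
Lemma omega1 : omega_eta (1 : RR) = 1.
Proof. exact: etasub1. Qed.

Lemma Rel_shift i (f g : RR) : (1 <= i)%N -> (i.+1 < n)%N ->
  Rel i f g -> Rel i.+1 (omega_eta f) (omega_eta g).
Proof.
move=> h1 h2; rewrite /Rel => /(congr1 (@omega_eta n)).
rewrite !omegaM !omegaB omega1 !omega_eta_eta; try lia.
by rewrite omega_s.
Qed.

Lemma Rword_shift l (f g : RR) : (forall i, i \in l -> (1 <= i)%N && (i.+1 < n)%N) ->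
  Rword l f g -> Rword (map S l) (omega_eta f) (omega_eta g).
Proof.
elim: l f => [|i l IH] f /= hl; first by move=> ->.
move=> [h [r w]]; exists (omega_eta h); split.
  have /andP [? ?] := hl i (mem_head _ _); exact: Rel_shift.
by apply: IH => // j hj; apply: hl; rewrite inE hj orbT.
Qed.

Definition y k : RR := 1 - Defs.eta n k.

Lemma s_etaM i : {morph @s_eta n i : x y / x * y}.
Proof. exact: etasubM. Qed.
Lemma s_etaX i (x : RR) k : s_eta i (x ^+ k) = s_eta i x ^+ k.
Proof. exact: etasubX. Qed.
Lemma s_eta0 i : s_eta i (0 : RR) = 0.
Proof. exact: etasub0. Qed.
Lemma s_eta_isC i (c : RR) : isC c -> s_eta i c = c.
Proof. by move=> h; apply: h. Qed.

Lemma s_eta_y i k : (1 <= i < n)%N -> (1 <= k <= n)%N ->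
  s_eta i (y k) = y (sw i k.-1).+1.
Proof. by move=> h1 h2; rewrite /y /s_eta etasubB etasub1 -/(s_eta _ _) s_eta_eta. Qed.

Lemma s_eta_yi i : (1 <= i < n)%N -> s_eta i (y i) = y i.+1.
Proof. move=> h; rewrite s_eta_y; try lia; congr y; rewrite /sw; ifs. Qed.

Lemma s_eta_yi1 i : (1 <= i < n)%N -> s_eta i (y i.+1) = y i.
Proof. move=> h; rewrite s_eta_y; try lia; congr y; rewrite /sw; ifs. Qed.

Lemma s_eta_yo i k : (1 <= i < n)%N -> (1 <= k <= n)%N -> k != i -> k != i.+1 ->
  s_eta i (y k) = y k.
Proof. move=> h h' /eqP h1 /eqP h2; rewrite s_eta_y //; congr y; rewrite /sw; ifs. Qed.


Inductive St : nat -> nat -> RR -> RR -> Prop :=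
| St0 s (c : RR) : isC c -> St s 0 c c
| StZ s K : St s K 0 0
| StS s K a g g' : (a <= K.+1)%N -> St s.+1 K g g' ->
    St s K.+1 (y s.+2 ^+ a * g) (y s.+1 ^+ a * g')
| StAdd s K f1 g1 f2 g2 : St s K f1 g1 -> St s K f2 g2 -> St s K (f1 + f2) (g1 + g2)
| StC s K (c : RR) f g : isC c -> St s K f g -> St s K (c * f) (c * g).

Lemma St_inv s K f f' : St s K f f' -> (s + K < n)%N ->
  forall j, (1 <= j <= s)%N -> s_eta j f = f.
Proof.
elim => {s K f f'}.
- by move=> s c hc _ j _; exact: s_eta_isC.
- by move=> s K _ j _; exact: s_eta0.
- move=> s K a g g' ha _ IH hb j hj.
  rewrite s_etaM s_etaX s_eta_yo; try lia.
  by rewrite IH //; lia.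
- move=> s K f1 g1 f2 g2 _ IH1 _ IH2 hb j hj.
  by rewrite /s_eta etasubD -!/(s_eta _ _) IH1 // IH2.
- move=> s K c f g hc _ IH hb j hj.
  by rewrite s_etaM s_eta_isC // IH.
Qed.


Lemma x_fixed s K (c : RR) e1 e2 i : (s + K.+2 < n)%N -> i \in iota s.+2 K.+1 ->
  s_eta i (y s.+1 ^+ e1 * y s.+1 ^+ e2) = y s.+1 ^+ e1 * y s.+1 ^+ e2.
Proof.
move=> hb; rewrite mem_iota => hi.
by rewrite s_etaM !s_etaX s_eta_yo //; lia.
Qed.

Lemma Lem s K f f' : St s K f f' -> (s + K.+2 <= n)%N -> forall p, (p <= K.+1)%N ->
  Rword (iota s.+1 K.+1) (y s.+1 ^+ p * f) (if p == 0%N then f' else 0).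
Proof.
elim => {s K f f'}.
- move=> s c hc hb p hp /=; exists (if p == 0%N then c else 0); split => //.
  case: p hp => [|[|//]] _ /=.
    by rewrite expr0 mul1r /Rel s_eta_isC // !subrr !mul0r.
  rewrite /Rel expr1 s_etaM s_eta_yi ?(s_eta_isC _ hc); try lia.
  rewrite /y; ring.
- move=> ? ? hb p hp; rewrite mulr0; case: (p == 0%N); exact: Rword_0.
- move=> s K a g g' ha Hst IH hb p hp.
  have IH' := IH ltac:(lia).
  have hg : s_eta s.+1 g = g by apply: (St_inv Hst); lia.
  have hsn : (1 <= s.+1 < n)%N by lia.
  change (iota s.+1 K.+2) with (s.+1 :: iota s.+2 K.+1).
  exists (g * Hf (y s.+1) (y s.+2) p a); split.
    have r : Rel s.+1 (y s.+1 ^+ p * y s.+2 ^+ a) (Hf (y s.+1) (y s.+2) p a).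
      rewrite /Rel s_etaM !s_etaX s_eta_yi // s_eta_yi1 //.
      have -> : Defs.eta n s.+2 - Defs.eta n s.+1 = y s.+1 - y s.+2 by rewrite /y; ring.
      exact: Hf_rel.
    have := Rel_mulc hg r.
    by rewrite [g * (y s.+1 ^+ p * _)]mulrC -mulrA.
  rewrite /Hf; case: leqP => hpa.
    apply: (Rword_eq (f := \sum_(k < (a - p).+1)
        (y s.+1 ^+ p * y s.+1 ^+ ((a - p).+1.-1 - k)) * (y s.+2 ^+ (p + k) * g))
      (g := \sum_(k < (a - p).+1)
        (y s.+1 ^+ p * y s.+1 ^+ ((a - p).+1.-1 - k)) * (if (p + k == 0)%N then g' else 0))).
    + exact: expand1.
    + case: p hp hpa => [|p] hp hpa; first by rewrite sum_first.
      apply: big1 => k _.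
      by rewrite (_ : (p.+1 + k == 0)%N = false) ?mulr0 //; lia.
    apply: Rword_sum => k; apply: Rword_mulc.
      move=> i hi; apply: (x_fixed (K := K)) => //; lia.
    apply: IH'; have := ltn_ord k; lia.
  apply: (Rword_eq (f := \sum_(k < (p - a).-1)
      (- (y s.+1 ^+ a.+1 * y s.+1 ^+ ((p - a).-1.-1 - k))) * (y s.+2 ^+ (a.+1 + k) * g))
    (g := \sum_(k < (p - a).-1)
      (- (y s.+1 ^+ a.+1 * y s.+1 ^+ ((p - a).-1.-1 - k))) * (if (a.+1 + k == 0)%N then g' else 0))).
  + exact: expand2.
  + have -> : (p == 0%N) = false by apply/eqP; lia.
    apply: big1 => k _.
    by rewrite (_ : (a.+1 + k == 0)%N = false) ?mulr0 //; lia.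
  apply: Rword_sum => k; apply: Rword_mulc.
    move=> i hi; rewrite /s_eta etasubN -/(s_eta _ _); congr (- _).
    apply: (x_fixed (K := K)) => //; lia.
  apply: IH'; have := ltn_ord k; lia.
- move=> s K f1 g1 f2 g2 _ IH1 _ IH2 hb p hp.
  apply: (Rword_eq (f := y s.+1 ^+ p * f1 + y s.+1 ^+ p * f2)
     (g := (if p == 0%N then g1 else 0) + (if p == 0%N then g2 else 0))).
  + by rewrite mulrDr.
  + by case: (p == 0%N); rewrite ?addr0.
  by apply: Rword_add; [exact: IH1 | exact: IH2].
- move=> s K c f g hc _ IH hb p hp.
  apply: (Rword_eq (f := c * (y s.+1 ^+ p * f)) (g := c * (if p == 0%N then g else 0))).
  + by rewrite mulrCA.
  + by case: (p == 0%N); rewrite ?mulr0.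
  apply: Rword_mulc; last exact: IH.
  by move=> i _; exact: s_eta_isC.
Qed.


Definition Pm m (t : RR) : RR := \sum_(j < m.+1) (-1) ^+ j * t ^+ j * Fpol n m j.
Definition Prod s K : RR := \prod_(1 <= k < K.+1) Pm (K.+1 - k) (y (s + k)).
Definition GT M : RR := \prod_(1 <= k < M) Pm (M - k) (y k).

Lemma St_eq s K f g f1 g1 : f = f1 -> g = g1 -> St s K f g -> St s K f1 g1.
Proof. by move=> -> ->. Qed.

Lemma St_sum s K I (r : seq I) (F G : I -> RR) :
  (forall i, St s K (F i) (G i)) -> St s K (\sum_(i <- r) F i) (\sum_(i <- r) G i).
Proof.
move=> h; elim: r => [|a r IH]; first by rewrite !big_nil; exact: StZ.
rewrite !big_cons; exact: StAdd.
Qed.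

Lemma Prod0 s : Prod s 0 = 1.
Proof. by rewrite /Prod big_geq. Qed.

Lemma Prod_S s K : Prod s K.+1 = Pm K.+1 (y s.+1) * Prod s.+1 K.
Proof.
rewrite /Prod; apply: etrans (prod_recl_gen _ _) _; apply: f_equal2; first by rewrite subn1 addn1.
by apply: eq_bigr => k _; rewrite subSS addSnnS.
Qed.

Lemma StGT s K : St s K (Prod s.+1 K) (Prod s K).
Proof.
elim: K s => [|K IH] s.
  rewrite !Prod0; apply: St0; exact: isC1.
rewrite !Prod_S.
apply: (St_eq (f := \sum_(j < K.+2) ((-1) ^+ j * Fpol n K.+1 j) * (y s.+2 ^+ j * Prod s.+2 K))
              (g := \sum_(j < K.+2) ((-1) ^+ j * Fpol n K.+1 j) * (y s.+1 ^+ j * Prod s.+1 K))).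
- exact: esym (Pm_expand _ _ _ _).
- exact: esym (Pm_expand _ _ _ _).
apply: St_sum => j; apply: StC.
  by apply: isCM; [apply: isCX; exact: isCN1 | exact: Fpol_C].
apply: StS; last exact: IH.
by have := ltn_ord j; lia.
Qed.

Lemma GT_S K : GT K.+2 = Pm K.+1 (y 1) * Prod 1 K.
Proof.
rewrite /GT /Prod; apply: etrans (prod_recl_gen _ _) _; apply: f_equal2; first by rewrite subn1.
by apply: eq_bigr => k _; rewrite subSS add1n.
Qed.

Lemma GT_P K : GT K.+1 = Prod 0 K.
Proof. by rewrite /GT /Prod; apply: eq_bigr => k _; rewrite add0n. Qed.

Lemma I2 K : (K.+2 <= n)%N -> Rword (iota 1 K.+1) (GT K.+2) (GT K.+1).
Proof.
move=> hK.
apply: (Rword_eq (f := \sum_(p < K.+2) ((-1) ^+ p * Fpol n K.+1 p) * (y 1 ^+ p * Prod 1 K))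
                 (g := \sum_(p < K.+2) ((-1) ^+ p * Fpol n K.+1 p) * (if (nat_of_ord p == 0)%N then Prod 0 K else 0))).
- rewrite GT_S; exact: esym (Pm_expand _ _ _ _).
- apply: (etrans (sum_if0 _ _)).
  have e : (-1) ^+ (@ord0 K.+1) * Fpol n K.+1 (@ord0 K.+1) = 1 :> RR.
    by rewrite /= expr0 Fpol0 mul1r.
  by rewrite e mul1r GT_P.
apply: Rword_sum => p; apply: Rword_mulc.
  move=> i _; apply: s_eta_isC.
  by apply: isCM; [apply: isCX; exact: isCN1 | exact: Fpol_C].
apply: (Lem (StGT 0 K)); first by rewrite add0n.
by have := ltn_ord p; lia.
Qed.

Lemma GTW M : (M <= n)%N -> Rword (W 0 M) (GT M) 1.
Proof.
elim: M => [|M IH] hM; first by rewrite /GT big_geq.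
case: M IH hM => [|K] IH hM; first by rewrite /GT big_geq.
rewrite /=; apply: (Rword_cat (I2 hM)); apply: IH; lia.
Qed.

End S.


Lemma prod_rev_gen (R : comRingType) m k (F : nat -> R) :
  \prod_(m <= i < k) F i = \prod_(m <= i < k) F (m + k - i.+1)%N.
Proof. exact: big_nat_rev. Qed.

Lemma wapp_cat n l1 l2 (w : 'S_n) : wapp (l1 ++ l2) w = wapp l2 (wapp l1 w).
Proof. by rewrite /wapp foldl_cat. Qed.

Lemma W_shift s M : W s.+1 M = map S (W s M).
Proof.
elim: M => [|M IH] //=; rewrite map_cat IH; congr (_ ++ _).
have -> : s.+2 = (1 + s.+1)%N by [].
by rewrite iotaDl; apply: eq_map => x; rewrite add1n.
Qed.

Section F.
Variable n : nat.
Local Notation RR := (Ring n).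

Lemma omega_y k : (1 <= k < n)%N -> omega_eta (y n k) = y n k.+1.
Proof.
move=> h; rewrite /y /omega_eta etasubB etasub1 -/(omega_eta _) omega_eta_eta //.
Qed.

Lemma omega_Pm m (t : RR) : omega_eta (Pm m t) = Pm m (omega_eta t).
Proof.
rewrite /Pm /omega_eta etasub_sum; apply: eq_bigr => j _.
rewrite !etasubM !etasubX etasubN etasub1 Fpol_C //.
Qed.

Lemma s_eta_Pm i m (t : RR) : s_eta i (Pm m t) = Pm m (s_eta i t).
Proof.
rewrite /Pm /s_eta etasub_sum; apply: eq_bigr => j _.
rewrite !etasubM !etasubX etasubN etasub1 Fpol_C //.
Qed.

Lemma omega_Prod K : (K < n)%N -> omega_eta (Prod n 0 K) = Prod n 1 K.
Proof.
move=> hK; rewrite /Prod /omega_eta etasub_prod; apply: eq_big_nat => k hk.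
by rewrite -/(omega_eta _) omega_Pm add0n omega_y ?add1n //; lia.
Qed.

Lemma Gtop_GT : Gtop n = GT n n.
Proof.
rewrite /Gtop /GT; apply: etrans (prod_rev_gen _ _ _) _.
apply: eq_big_nat => i hi.
have -> : (1 + n - i.+1 = n - i)%N by lia.
have e : (n - (n - i) = i)%N by lia.
transitivity (Pm (n - i) (y n (n - (n - i)))); first by [].
by rewrite e.
Qed.

End F.

Section Main.
Variable n : nat.
Hypothesis hn : (3 <= n)%N.
Variable G : 'S_n -> Ring n.
Hypothesis hG : is_QGroth G.

Lemma HypChain l (w : 'S_n) : valid n l -> chain_desc l w -> Rword l (G w) (G (wapp l w)).
Proof.
elim: l w => [|i l IH] w //= /andP [hi hl] [hd hc].
exists (G (Defs.pcomp (sr n i) w)); split; last exact: IH.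
have h1 : (1 <= i)%N by lia.
have h2 : (i <= n.-1)%N by lia.
have := hG.2 i h1 h2 w; rewrite hd => h.
exact: Rel_DQ.
Qed.

Definition psi1 : Ring n := Pm n.-1 (y n 1).

Lemma psi1_fixed i : (2 <= i < n)%N -> s_eta i psi1 = psi1.
Proof.
move=> h; rewrite /psi1 s_eta_Pm s_eta_yo //; lia.
Qed.

Lemma Gw0 : G (w0 n) = psi1 * omega_eta (GT n n.-1).
Proof.
rewrite hG.1 Gtop_GT.
have h := GT_S n (n - 2).
rewrite (_ : (n - 2).+2 = n) in h; last lia.
rewrite (_ : (n - 2).+1 = n.-1) in h; last lia.
have hP := GT_P n (n - 2).
rewrite (_ : (n - 2).+1 = n.-1) in hP; last lia.
rewrite h hP omega_Prod //; lia.
Qed.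


Lemma GX : Rword (W 0 (n - 2)) (GT n n.-1) (G (sprod n (rev (iota 1 (n - 2))))).
Proof.
have [cA1 cA2] := chain_desc_cat (chainA hn).
have vI : valid n (iota 1 n.-1) by apply: valid_iota; lia.
have vW : valid n (W 0 (n - 2)) by apply: valid_W; lia.
have r1 := HypChain vI cA1.
have r2 := HypChain vW cA2.
have eu : G (wapp (iota 1 n.-1) (w0 n)) = GT n n.-1.
  apply: (Rword_uniq vI r1).
  rewrite hG.1 Gtop_GT.
  have h := I2 (n := n) (K := n - 2) ltac:(lia).
  rewrite (_ : (n - 2).+2 = n) in h; last lia.
  by rewrite (_ : (n - 2).+1 = n.-1) in h; last lia.
rewrite -wapp_cat (P1 hn) eu in r2.
exact: r2.
Qed.

Lemma Gst : G (tr n 1 n) = psi1 * omega_eta (G (sprod n (rev (iota 1 (n - 2))))).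
Proof.
have vW : valid n (W 1 (n - 2)) by apply: valid_W; lia.
have r := HypChain vW (chainB hn); rewrite (P2 hn) in r.
have r' : Rword (W 1 (n - 2)) (psi1 * omega_eta (GT n n.-1))
                (psi1 * omega_eta (G (sprod n (rev (iota 1 (n - 2)))))).
  apply: Rword_mulc.
    by move=> i /mem_W hi; apply: psi1_fixed; lia.
  rewrite W_shift; apply: Rword_shift; last exact: GX.
  by move=> i /mem_W hi; apply/andP; split; lia.
exact: (Rword_uniq vW r (Rword_eq (esym Gw0) (erefl _) r')).
Qed.

Lemma Gc : G (sprod n (iota 1 n.-1)) = psi1.
Proof.
have vW : valid n (W 1 n.-1) by apply: valid_W; lia.
have r := HypChain vW (chainC hn); rewrite (P3 hn) in r.
have r' : Rword (W 1 n.-1) (psi1 * omega_eta (GT n n.-1)) (psi1 * omega_eta 1).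
  apply: Rword_mulc.
    by move=> i /mem_W hi; apply: psi1_fixed; lia.
  rewrite W_shift; apply: Rword_shift; last by apply: GTW; lia.
  by move=> i /mem_W hi; apply/andP; split; lia.
have e : psi1 * omega_eta 1 = psi1 by rewrite omega1 mulr1.
exact: (Rword_uniq vW r (Rword_eq (esym Gw0) e r')).
Qed.

Lemma main_res : G (tr n 1 n) =
    G (sprod n (iota 1 n.-1)) * omega_eta (G (sprod n (rev (iota 1 (n - 2)%N)))).
Proof. by rewrite Gst Gc. Qed.

End Main.


Theorem proposition5p2 (n : nat) (hn : (3 <= n)%N) (G : 'S_n -> Ring n) :
  is_QGroth G ->
  G (tr n 1 n) =
    G (sprod n (iota 1 n.-1)) * omega_eta (G (sprod n (rev (iota 1 (n - 2)%N)))).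
Proof.
move=> hG; exact: (main_res hn hG).
Qed.
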